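(* Let $\alpha_1,\dots,\alpha_K\in\mathbb R^d\setminus\{0\}$ be distinct and $\gamma_1,\dots,\gamma_M>0$ ($M\le K$). Then there is at most one vector $\hat\theta\in\mathbb R^d$ with the following properties: (i) $\alpha_k^{T}\hat\theta=\gamma_k$ for $k=1,\dots,M$; (ii) there exists $\{\alpha_{j_1},\dots,\alpha_{j_p}\}\subseteq\{\alpha_{M+1},\dots,\alpha_K\}$ such that (a) $\alpha_1,\dots,\alpha_M,\alpha_{j_1},\dots,\alpha_{j_p}$ are linearly independent; (b) $\hat\theta\in\mathrm{span}\{\alpha_1,\dots,\alpha_M,\alpha_{j_1},\dots,\alpha_{j_p}\}$ and in the expansion of $\hat\theta$ in this basis the coefficient of each $\alpha_{j_m}$, $m=1,\dots,p$, is negative; (c) $\alpha_{j_m}^{T}\hat\theta=0$ for $m=1,\dots,p$; (d) $\alpha^{T}\hat\theta<0$ for every $\alpha\in\{\alpha_{M+1},\dots,\alpha_K\}\setminus\{\alpha_{j_1},\dots,\alpha_{j_p}\}$. (Uniqueness holds even if different vectors use different subsets in (ii).) *)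

(* Defs.v *)
From mathcomp Require Import all_boot all_order all_algebra.
Set Implicit Arguments. Unset Strict Implicit. Unset Printing Implicit Defensive.
Import Order.TTheory GRing.Theory Num.Theory.
Local Open Scope ring_scope.

Definition dotv (R : realFieldType) (d : nat) (u v : 'rV[R]_d) : R :=
  \sum_(i < d) u 0 i * v 0 i.

(* The index set {1..M} u J, with J a subset of {M+1..K} (0-based here). *)
Definition active_set (M K : nat) (J : {set 'I_K}) : {set 'I_K} :=
  [set k : 'I_K | (k < M)%N || (k \in J)].

Definition candidate_with (R : realFieldType) (d M K : nat)
    (alpha : 'I_K -> 'rV[R]_d) (gamma : 'I_M -> R) (theta : 'rV[R]_d)
    (J : {set 'I_K}) : Prop :=
  (forall j : 'I_K, j \in J -> (M <= j)%N) /\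
  [/\
      (forall (k : 'I_K) (Hk : (k < M)%N), dotv (alpha k) theta = gamma (Ordinal Hk)),
      free [seq alpha k | k <- enum (active_set M J)],
      (exists c : 'I_K -> R,
          theta = \sum_(k in active_set M J) c k *: alpha k /\
          (forall j : 'I_K, j \in J -> c j < 0)),
      (forall j : 'I_K, j \in J -> dotv (alpha j) theta = 0) &
      (forall k : 'I_K, (M <= k)%N -> k \notin J -> dotv (alpha k) theta < 0)].

Definition candidate (R : realFieldType) (d M K : nat)
    (alpha : 'I_K -> 'rV[R]_d) (gamma : 'I_M -> R) (theta : 'rV[R]_d) : Prop :=
  exists J : {set 'I_K}, candidate_with alpha gamma theta J.

(* Main.v *)
Require Import Defs.
From mathcomp Require Import all_boot all_order all_algebra.
Import Order.TTheory GRing.Theory Num.Theory.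
Local Open Scope ring_scope.

Lemma dotvC (R : realFieldType) (d : nat) (u v : 'rV[R]_d) : dotv u v = dotv v u.
Proof. by rewrite /dotv; apply: eq_bigr => i _; rewrite mulrC. Qed.

Lemma dotvBr (R : realFieldType) (d : nat) (u v w : 'rV[R]_d) :
  dotv u (v - w) = dotv u v - dotv u w.
Proof.
rewrite /dotv -sumrB; apply: eq_bigr => i _; rewrite !mxE mulrBr //.
Qed.

Lemma dotvBl (R : realFieldType) (d : nat) (u v w : 'rV[R]_d) :
  dotv (v - w) u = dotv v u - dotv w u.
Proof. by rewrite dotvC dotvBr dotvC [dotv u w]dotvC. Qed.

Lemma dotv_suml (R : realFieldType) (d K : nat) (A : {set 'I_K})
  (c : 'I_K -> R) (a : 'I_K -> 'rV[R]_d) (v : 'rV[R]_d) :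
  dotv (\sum_(k in A) c k *: a k) v = \sum_(k in A) c k * dotv (a k) v.
Proof.
rewrite /dotv.
under eq_bigr => i _ do rewrite summxE mulr_suml.
rewrite exchange_big /=; apply: eq_bigr => k _.
rewrite mulr_sumr; apply: eq_bigr => i _; rewrite !mxE mulrA //.
Qed.

Lemma dotv_ge0 (R : realFieldType) (d : nat) (u : 'rV[R]_d) : 0 <= dotv u u.
Proof. by rewrite /dotv; apply: sumr_ge0 => i _; rewrite -expr2 sqr_ge0. Qed.

Lemma dotv_eq0 (R : realFieldType) (d : nat) (u : 'rV[R]_d) : dotv u u = 0 -> u = 0.
Proof.
move=> H; apply/rowP => i; rewrite mxE.
have Hp : forall j : 'I_d, predT j -> 0 <= u 0 j * u 0 j.
  by move=> j _; rewrite -expr2 sqr_ge0.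
have := psumr_eq0P Hp H (i := i) isT.
by move/eqP; rewrite -expr2 sqrf_eq0 => /eqP.
Qed.

Lemma key (R : realFieldType) (d M K : nat)
    (alpha : 'I_K -> 'rV[R]_d) (gamma : 'I_M -> R)
    (theta theta' : 'rV[R]_d) (J : {set 'I_K}) :
  candidate_with alpha gamma theta J ->
  (forall (k : 'I_K) (Hk : (k < M)%N), dotv (alpha k) theta' = gamma (Ordinal Hk)) ->
  (forall k : 'I_K, (M <= k)%N -> dotv (alpha k) theta' <= 0) ->
  dotv (theta - theta') theta <= 0.
Proof.
move=> [HJ [Hi _ [c [Hth Hc]] Hc0 _]] Hi' Hle.
rewrite dotvC {1}Hth dotv_suml; apply: sumr_le0 => k.
rewrite inE dotvBr => /orP [Hk|Hk].
  by rewrite Hi Hi' subrr mulr0.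
rewrite Hc0 // sub0r; apply: mulr_le0_ge0; first exact: ltW (Hc k Hk).
by rewrite oppr_ge0; apply: Hle; apply: HJ.
Qed.

Lemma cand_le (R : realFieldType) (d M K : nat)
    (alpha : 'I_K -> 'rV[R]_d) (gamma : 'I_M -> R)
    (theta : 'rV[R]_d) (J : {set 'I_K}) :
  candidate_with alpha gamma theta J ->
  forall k : 'I_K, (M <= k)%N -> dotv (alpha k) theta <= 0.
Proof.
move=> [HJ [Hi _ _ Hc0 Hd]] k Hk.
case: (boolP (k \in J)) => HkJ; first by rewrite Hc0.
exact: ltW (Hd k Hk HkJ).
Qed.

Arguments key {R d M K alpha gamma theta theta' J}.
Arguments cand_le {R d M K alpha gamma theta J}.

Theorem lemma3 (R : realFieldType) (d M K : nat)
    (alpha : 'I_K -> 'rV[R]_d) (gamma : 'I_M -> R)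
    (HMK : (M <= K)%N)
    (Hnz : forall k : 'I_K, alpha k != 0)
    (Hinj : injective alpha)
    (Hpos : forall m : 'I_M, 0 < gamma m)
    (theta1 theta2 : 'rV[R]_d) :
  candidate alpha gamma theta1 -> candidate alpha gamma theta2 ->
  theta1 = theta2.
Proof.
move=> [J1 C1] [J2 C2].
have Hi1 := C1; have Hi2 := C2.
move: Hi1 Hi2 => [_ [Hi1 _ _ _ _]] [_ [Hi2 _ _ _ _]].
have H1 := key C1 Hi2 (cand_le C2).
have H2 := key C2 Hi1 (cand_le C1).
have E : dotv (theta1 - theta2) (theta1 - theta2)
   = dotv (theta1 - theta2) theta1 + dotv (theta2 - theta1) theta2.
  rewrite !dotvBl !dotvBr [dotv theta2 theta1]dotvC.
  by rewrite opprB.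
apply/eqP; rewrite -subr_eq0; apply/eqP; apply: dotv_eq0.
apply/le_anti; rewrite dotv_ge0 andbT E.
by rewrite -(addr0 0) lerD.
Qed.
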